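(* Let $\mathcal E$ be an environment and $t_0,t_1$ closed normal forms with $t_0\approx_{\mathcal E}t_1$. Then for every context $C$ such that $C[t_0]$ and $C[t_1]$ are closed, $C[t_0]\approx_{\mathcal E}C[t_1]$.
   Context: Terms of $\lambda_S$: $t ::= x \mid \lambda x.t \mid t\,t \mid \mathcal{S}k.t \mid \langle t\rangle$ (shift binds $k$; $\langle\cdot\rangle$ reset), up to $\alpha$-conversion. Values $v::=\lambda x.t$. Pure contexts $E ::= \Box \mid v\,E \mid E\,t$; evaluation contexts $F ::= \Box \mid v\,F \mid F\,t \mid \langle F\rangle$; contexts $C ::= \Box \mid \lambda x.C \mid t\,C \mid C\,t \mid \mathcal{S}k.C \mid \langle C\rangle$. Reduction: $F[(\lambda x.t)v]\to F[t\{v/x\}]$; $F[\langle E[\mathcal Sk.t]\rangle]\to F[\langle t\{\lambda x.\langle E[x]\rangle/k\}\rangle]$ ($x\notin\mathrm{fv}(E)$); $F[\langle v\rangle]\to F[v]$; $\to^*$ reflexive-transitive closure. Stuck term: not a value and irreducible; normal form: value or stuck term. Closures: for $R$ a relation on closed terms, $\widetilde R$ is the smallest relation containing $R$, all $(x,x)$, closed under all term constructors, restricted to closed terms; $\widehat R$ is the smallest relation on closed evaluation contexts with $\Box\widehat R\Box$, $v_0F_0\widehat Rv_1F_1$ if $F_0\widehat RF_1,v_0\widetilde Rv_1$; $F_0t_0\widehat RF_1t_1$ if $F_0\widehat RF_1,t_0\widetilde Rt_1$; $\langle F_0\rangle\widehat R\langle F_1\rangle$ if $F_0\widehat RF_1$.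 Environmental bisimilarity: an environment $\mathcal E$ is a relation on closed normal forms relating values only with values and stuck terms only with stuck terms; an environmental relation $\mathcal X$ is a set of environments and triples $(\mathcal E,t_0,t_1)$ with $t_0,t_1$ closed, written $t_0\mathcal X_{\mathcal E}t_1$. $\mathcal X$ is an environmental bisimulation if (1) whenever $t_0\mathcal X_{\mathcal E}t_1$: (a) $t_0\to t_0'$ implies $t_1\to^*t_1'$ with $t_0'\mathcal X_{\mathcal E}t_1'$; (b) if $t_0$ is a value $v_0$ then $t_1\to^*v_1$, a value, with $\mathcal E\cup\{(v_0,v_1)\}\in\mathcal X$; (c) if $t_0$ is stuck then $t_1\to^*t_1'$ stuck with $\mathcal E\cup\{(t_0,t_1')\}\in\mathcal X$; (d) symmetric conditions for $t_1$; (2) whenever $\mathcal E\in\mathcal X$: (a) $(\lambda x.t_0)\mathcal E(\lambda x.t_1)$ and $v_0\widetilde{\mathcal E}v_1$ imply $t_0\{v_0/x\}\mathcal X_{\mathcal E}t_1\{v_1/x\}$; (b) $E_0[\mathcal Sk.t_0]\mathcal EE_1[\mathcal Sk.t_1]$ and pure $E_0'\widehat{\mathcal E}E_1'$ imply $\langle t_0\{\lambda x.\langle E_0'[E_0[x]]\rangle/k\}\rangle\mathcal X_{\mathcal E}\langle t_1\{\lambda x.\langle E_1'[E_1[x]]\rangle/k\}\rangle$, $x$ fresh. $\approx$ is the largest environmental bisimulation; $t_0\approx_{\mathcal E}t_1$ means $(\mathcal E,t_0,t_1)\in\approx$. *)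

(* Defs.v *)
From Stdlib Require Import Arith.

(* Terms: Shift t binds k as index 0 in t; Lam t binds x as index 0. *)
Inductive term : Type :=
| Var : nat -> term
| Lam : term -> term
| App : term -> term -> term
| Shift : term -> term
| Reset : term -> term.

Definition is_value (t : term) : Prop :=
  match t with Lam _ => True | _ => False end.

Fixpoint closed_at (k : nat) (t : term) : Prop :=
  match t with
  | Var n => n < k
  | Lam b => closed_at (S k) b
  | App a b => closed_at k a /\ closed_at k b
  | Shift b => closed_at (S k) b
  | Reset b => closed_at k b
  end.

Definition closed (t : term) : Prop := closed_at 0 t.

Fixpoint lift (c : nat) (t : term) : term :=
  match t with
  | Var n => if n <? c then Var n else Var (S n)
  | Lam b => Lam (lift (S c) b)
  | App a b => App (lift c a) (lift c b)
  | Shift b => Shift (lift (S c) b)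
  | Reset b => Reset (lift c b)
  end.

Fixpoint liftn (n : nat) (t : term) : term :=
  match n with 0 => t | S m => lift 0 (liftn m t) end.

Fixpoint subst_at (k : nat) (t : term) (v : term) : term :=
  match t with
  | Var n => if n =? k then liftn k v
             else if k <? n then Var (pred n) else Var n
  | Lam b => Lam (subst_at (S k) b v)
  | App a b => App (subst_at k a v) (subst_at k b v)
  | Shift b => Shift (subst_at (S k) b v)
  | Reset b => Reset (subst_at k b v)
  end.

(* t{v/x} where x is the variable bound by the enclosing binder of t *)
Definition subst (t v : term) : term := subst_at 0 t v.

(* Evaluation-context shapes: F ::= [] | v F | F t | <F> *)
Inductive ectx : Type :=
| Hole : ectx
| AppR : term -> ectx -> ectx
| AppL : ectx -> term -> ectx
| RstC : ectx -> ectx.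

Fixpoint plugE (F : ectx) (t : term) : term :=
  match F with
  | Hole => t
  | AppR v F' => App v (plugE F' t)
  | AppL F' u => App (plugE F' t) u
  | RstC F' => Reset (plugE F' t)
  end.

Fixpoint liftE (c : nat) (F : ectx) : ectx :=
  match F with
  | Hole => Hole
  | AppR v F' => AppR (lift c v) (liftE c F')
  | AppL F' u => AppL (liftE c F') (lift c u)
  | RstC F' => RstC (liftE c F')
  end.

Fixpoint evalctx (F : ectx) : Prop :=
  match F with
  | Hole => True
  | AppR v F' => is_value v /\ evalctx F'
  | AppL F' _ => evalctx F'
  | RstC F' => evalctx F'
  end.

Fixpoint pure (E : ectx) : Prop :=
  match E with
  | Hole => True
  | AppR v E' => is_value v /\ pure E'
  | AppL E' _ => pure E'
  | RstC _ => False
  end.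

(* the continuation  \x. < E[x] >  with x fresh *)
Definition capture (E : ectx) : term := Lam (Reset (plugE (liftE 0 E) (Var 0))).

Inductive step : term -> term -> Prop :=
| step_beta : forall F t v, evalctx F -> is_value v ->
    step (plugE F (App (Lam t) v)) (plugE F (subst t v))
| step_shift : forall F E t, evalctx F -> pure E ->
    step (plugE F (Reset (plugE E (Shift t))))
         (plugE F (Reset (subst t (capture E))))
| step_reset : forall F v, evalctx F -> is_value v ->
    step (plugE F (Reset v)) (plugE F v).

Inductive steps : term -> term -> Prop :=
| steps_refl : forall t, steps t t
| steps_step : forall t u w, step t u -> steps u w -> steps t w.

Definition stuck (t : term) : Prop := ~ is_value t /\ forall u, ~ step t u.
Definition normal_form (t : term) : Prop := is_value t \/ stuck t.

(* General contexts C ::= [] | \x.C | t C | C t | Sk.C | <C>  (plugging may capture) *)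
Inductive ctx : Type :=
| CHole : ctx
| CLam : ctx -> ctx
| CAppR : term -> ctx -> ctx
| CAppL : ctx -> term -> ctx
| CShift : ctx -> ctx
| CReset : ctx -> ctx.

Fixpoint plugC (C : ctx) (t : term) : term :=
  match C with
  | CHole => t
  | CLam C' => Lam (plugC C' t)
  | CAppR u C' => App u (plugC C' t)
  | CAppL C' u => App (plugC C' t) u
  | CShift C' => Shift (plugC C' t)
  | CReset C' => Reset (plugC C' t)
  end.

Definition rel := term -> term -> Prop.

Inductive tilde_open (R : rel) : rel :=
| to_R : forall a b, R a b -> tilde_open R a b
| to_var : forall n, tilde_open R (Var n) (Var n)
| to_lam : forall a b, tilde_open R a b -> tilde_open R (Lam a) (Lam b)
| to_app : forall a a' b b', tilde_open R a b -> tilde_open R a' b' ->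
    tilde_open R (App a a') (App b b')
| to_shift : forall a b, tilde_open R a b -> tilde_open R (Shift a) (Shift b)
| to_reset : forall a b, tilde_open R a b -> tilde_open R (Reset a) (Reset b).

Definition tilde (R : rel) : rel :=
  fun a b => tilde_open R a b /\ closed a /\ closed b.

Inductive hat (R : rel) : ectx -> ectx -> Prop :=
| hat_hole : hat R Hole Hole
| hat_appR : forall v0 v1 F0 F1, is_value v0 -> is_value v1 ->
    hat R F0 F1 -> tilde R v0 v1 -> hat R (AppR v0 F0) (AppR v1 F1)
| hat_appL : forall F0 F1 t0 t1,
    hat R F0 F1 -> tilde R t0 t1 -> hat R (AppL F0 t0) (AppL F1 t1)
| hat_rst : forall F0 F1, hat R F0 F1 -> hat R (RstC F0) (RstC F1).

Definition environment (E : rel) : Prop :=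
  forall a b, E a b -> closed a /\ closed b /\
    ((is_value a /\ is_value b) \/ (stuck a /\ stuck b)).

Definition add_pair (E : rel) (a b : term) : rel :=
  fun x y => E x y \/ (x = a /\ y = b).

Record envrel : Type := {
  X_env : rel -> Prop;
  X_tri : rel -> term -> term -> Prop }.

Definition well_formed_envrel (X : envrel) : Prop :=
  (forall E, X_env X E -> environment E) /\
  (forall E t0 t1, X_tri X E t0 t1 -> environment E /\ closed t0 /\ closed t1).

Definition env_bisim (X : envrel) : Prop :=
  well_formed_envrel X /\
  (forall E t0 t1, X_tri X E t0 t1 ->
     (forall t0', step t0 t0' -> exists t1', steps t1 t1' /\ X_tri X E t0' t1') /\
     (is_value t0 -> exists v1, steps t1 v1 /\ is_value v1 /\
                                X_env X (add_pair E t0 v1)) /\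
     (stuck t0 -> exists t1', steps t1 t1' /\ stuck t1' /\
                              X_env X (add_pair E t0 t1')) /\
     (forall t1', step t1 t1' -> exists t0', steps t0 t0' /\ X_tri X E t0' t1') /\
     (is_value t1 -> exists v0, steps t0 v0 /\ is_value v0 /\
                                X_env X (add_pair E v0 t1)) /\
     (stuck t1 -> exists t0', steps t0 t0' /\ stuck t0' /\
                              X_env X (add_pair E t0' t1))) /\
  (forall E, X_env X E ->
     (forall b0 b1 v0 v1, E (Lam b0) (Lam b1) -> is_value v0 -> is_value v1 ->
        tilde E v0 v1 -> X_tri X E (subst b0 v0) (subst b1 v1)) /\
     (forall E0 E1 s0 s1 E0' E1',
        pure E0 -> pure E1 ->
        E (plugE E0 (Shift s0)) (plugE E1 (Shift s1)) ->
        pure E0' -> pure E1' -> hat E E0' E1' ->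
        X_tri X E
          (Reset (subst s0 (Lam (Reset (plugE (liftE 0 E0') (plugE (liftE 0 E0) (Var 0)))))))
          (Reset (subst s1 (Lam (Reset (plugE (liftE 0 E1') (plugE (liftE 0 E1) (Var 0))))))))).

Definition bisimilar (E : rel) (t0 t1 : term) : Prop :=
  exists X, env_bisim X /\ X_tri X E t0 t1.

(* Main.v *)
Require Import Defs.
From Stdlib Require Import Arith Lia Classical FunctionalExtensionality PropExtensionality.

Fixpoint compE (A B : ectx) : ectx :=
  match A with
  | Hole => B
  | AppR v A' => AppR v (compE A' B)
  | AppL A' u => AppL (compE A' B) u
  | RstC A' => RstC (compE A' B)
  end.

Lemma plugE_comp : forall A B t, plugE (compE A B) t = plugE A (plugE B t).
Proof. induction A; intros; simpl; try rewrite IHA; auto. Qed.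

Lemma liftE_comp : forall A c B, liftE c (compE A B) = compE (liftE c A) (liftE c B).
Proof. induction A; intros; simpl; try rewrite IHA; auto. Qed.

Lemma evalctx_comp : forall A B, evalctx A -> evalctx B -> evalctx (compE A B).
Proof. induction A; simpl; intuition. Qed.

Lemma pure_comp : forall A B, pure A -> pure B -> pure (compE A B).
Proof. induction A; simpl; intuition. Qed.

Lemma pure_evalctx : forall E, pure E -> evalctx E.
Proof. induction E; simpl; intuition. Qed.

Fixpoint closedE (k : nat) (F : ectx) : Prop :=
  match F with
  | Hole => True
  | AppR v F' => closed_at k v /\ closedE k F'
  | AppL F' u => closedE k F' /\ closed_at k u
  | RstC F' => closedE k F'
  end.

Lemma closed_plugE : forall F k t, closed_at k (plugE F t) <-> closedE k F /\ closed_at k t.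
Proof. induction F; intros; simpl; try rewrite IHF; intuition. Qed.

Lemma closed_at_mono : forall t k m, closed_at k t -> k <= m -> closed_at m t.
Proof.
  induction t; intros k m H Hle; simpl in *; try lia;
  try (eapply IHt; [eassumption| lia]);
  try (destruct H; split; [eapply IHt1|eapply IHt2]; eauto).
Qed.

Lemma closedE_mono : forall F k m, closedE k F -> k <= m -> closedE m F.
Proof.
  induction F; intros k m H Hle; simpl in *; intuition eauto using closed_at_mono.
Qed.

Lemma lift_closed : forall t c, closed_at c t -> lift c t = t.
Proof.
  induction t; intros c H; simpl in *.
  - destruct (Nat.ltb_spec n c); auto; lia.
  - rewrite IHt; auto.
  - destruct H; rewrite IHt1, IHt2; auto.
  - rewrite IHt; auto.
  - rewrite IHt; auto.
Qed.

Lemma liftn_closed : forall n t, closed t -> liftn n t = t.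
Proof.
  induction n; intros t H; simpl; auto. rewrite IHn; auto. apply lift_closed; auto.
Qed.

Lemma liftE_closed : forall F c, closedE c F -> liftE c F = F.
Proof.
  induction F; intros c H; simpl in *; auto.
  - destruct H; rewrite lift_closed, IHF; auto.
  - destruct H; rewrite lift_closed, IHF; auto.
  - rewrite IHF; auto.
Qed.

Lemma subst_at_closed : forall t k v, closed_at k t -> subst_at k t v = t.
Proof.
  induction t; intros k v H; simpl in *.
  - destruct (Nat.eqb_spec n k); [lia|]. destruct (Nat.ltb_spec k n); auto; lia.
  - rewrite IHt; auto.
  - destruct H; rewrite IHt1, IHt2; auto.
  - rewrite IHt; auto.
  - rewrite IHt; auto.
Qed.

Lemma closed_subst_at : forall t k v, closed_at (S k) t -> closed v -> closed_at k (subst_at k t v).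
Proof.
  induction t; intros k v H Hv; simpl in *.
  - destruct (Nat.eqb_spec n k).
    + rewrite liftn_closed; auto. eapply closed_at_mono; eauto; lia.
    + destruct (Nat.ltb_spec k n); simpl; lia.
  - apply IHt; auto.
  - destruct H; split; auto.
  - apply IHt; auto.
  - apply IHt; auto.
Qed.

Lemma closed_subst : forall t v, closed_at 1 t -> closed v -> closed (subst t v).
Proof. intros; apply closed_subst_at; auto. Qed.

Lemma step_ctx : forall t u, step t u -> forall F, evalctx F -> step (plugE F t) (plugE F u).
Proof.
  intros t u H; destruct H; intros G HG; rewrite <- !plugE_comp; constructor; auto using evalctx_comp.
Qed.

Lemma steps_trans : forall a b c, steps a b -> steps b c -> steps a c.
Proof. intros a b c H; induction H; intros; eauto using steps_step. Qed.

Lemma steps_ctx : forall t u, steps t u -> forall F, evalctx F -> steps (plugE F t) (plugE F u).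
Proof. intros t u H; induction H; intros; [constructor|]; eapply steps_step; eauto using step_ctx. Qed.

Lemma plugE_value : forall F t, is_value (plugE F t) -> F = Hole.
Proof. destruct F; simpl; intros; auto; contradiction. Qed.

Lemma value_no_step : forall v u, is_value v -> ~ step v u.
Proof.
  intros v u Hv H; destruct H;
  match goal with H : evalctx ?F |- _ => destruct F end; simpl in Hv; auto.
Qed.

Lemma normal_no_step : forall v u, normal_form v -> ~ step v u.
Proof.
  intros v u [H|H]; [apply value_no_step; auto| apply H].
Qed.

Lemma normal_steps : forall t u, normal_form t -> steps t u -> u = t.
Proof.
  intros t u Hn H; destruct H; auto. exfalso; eapply normal_no_step; eauto.
Qed.

Lemma progress : forall t, closed t ->
  is_value t \/ (exists u, step t u) \/ (exists E s, pure E /\ t = plugE E (Shift s)).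
Proof.
  unfold closed; induction t; intros H; simpl in H.
  - lia.
  - left; simpl; auto.
  - destruct H as [H1 H2].
    destruct (IHt1 H1) as [V1|[[u S1]|[E [s [PE ->]]]]].
    + destruct t1; simpl in V1; try contradiction.
      destruct (IHt2 H2) as [V2|[[u S2]|[E [s [PE ->]]]]].
      * right; left. eexists. apply (step_beta Hole); simpl; auto.
      * right; left. eexists. apply (step_ctx _ _ S2 (AppR (Lam t1) Hole)); simpl; auto.
      * right; right. exists (AppR (Lam t1) E), s; simpl; auto.
    + right; left. eexists. apply (step_ctx _ _ S1 (AppL Hole t2)); simpl; auto.
    + right; right. exists (AppL E t2), s; simpl; auto.
  - right; right. exists Hole, t; simpl; auto.
  - destruct (IHt H) as [V1|[[u S1]|[E [s [PE ->]]]]].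
    + right; left. eexists. apply (step_reset Hole); simpl; auto.
    + right; left. eexists. apply (step_ctx _ _ S1 (RstC Hole)); simpl; auto.
    + right; left. eexists. apply (step_shift Hole); simpl; auto.
Qed.

Lemma stuck_decomp : forall t, closed t -> stuck t -> exists E s, pure E /\ t = plugE E (Shift s).
Proof.
  intros t Hc [Hv Hs]. destruct (progress t Hc) as [H|[[u H]|H]]; auto.
  - contradiction.
  - exfalso; eapply Hs; eauto.
Qed.
Definition redex (r : term) : Prop :=
  (exists t v, is_value v /\ r = App (Lam t) v) \/
  (exists E t, pure E /\ r = Reset (plugE E (Shift t))) \/
  (exists v, is_value v /\ r = Reset v).

Lemma plug_redex_not_value : forall F r, redex r -> ~ is_value (plugE F r).
Proof.
  intros F r Hr Hv. pose proof (plugE_value _ _ Hv) as HF; subst F; simpl in Hv.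
  destruct Hr as [[? [? [? ->]]]|[[? [? [? ->]]]|[? [? ->]]]]; simpl in Hv; auto.
Qed.

Lemma pure_shift_not_value : forall E s, ~ is_value (plugE E (Shift s)).
Proof. destruct E; simpl; auto. Qed.

Lemma plug_redex_not_shift : forall E, pure E -> forall F r s, evalctx F -> redex r ->
  plugE F r <> plugE E (Shift s).
Proof.
  induction E; intros PE F r s EF Hr Heq; simpl in *.
  - destruct F; simpl in Heq; try discriminate.
    subst. destruct Hr as [[? [? [? Hx]]]|[[? [? [? Hx]]]|[? [? Hx]]]]; discriminate.
  - destruct PE as [Vt PE]. destruct F; simpl in Heq; try discriminate.
    + subst. destruct Hr as [[? [? [Vx Hx]]]|[[? [? [? Hx]]]|[? [? Hx]]]]; try discriminate.
      injection Hx; intros; subst. eapply pure_shift_not_value; eauto.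
    + injection Heq; intros; subst. simpl in EF. eapply IHE; eauto. tauto.
    + injection Heq; intros; subst. simpl in EF. eapply plug_redex_not_value; eauto.
  - destruct F; simpl in Heq; try discriminate.
    + subst. destruct Hr as [[? [? [Vx Hx]]]|[[? [? [? Hx]]]|[? [? Hx]]]]; try discriminate.
      injection Hx; intros; subst. match goal with H: plugE ?E (Shift ?s) = _ |- _ => apply (pure_shift_not_value E s); rewrite H; simpl in *; tauto | H: _ = plugE ?E (Shift ?s) |- _ => apply (pure_shift_not_value E s); rewrite <- H; simpl in *; tauto end.
    + injection Heq; intros; subst. simpl in EF. exact (pure_shift_not_value _ _ (proj1 EF)).
    + injection Heq; intros; subst. simpl in EF. eapply IHE; eauto.
  - contradiction.
Qed.

Lemma pure_decomp_unique : forall E, pure E -> forall E' s s', pure E' ->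
  plugE E (Shift s) = plugE E' (Shift s') -> E = E' /\ s = s'.
Proof.
  induction E; intros PE E' s s' PE' Heq; simpl in *.
  - destruct E'; simpl in Heq; try discriminate.
    + injection Heq; auto.
  - destruct PE as [Vt PE]. destruct E'; simpl in Heq; try discriminate.
    + injection Heq; intros; subst. simpl in PE'. destruct (IHE PE E' s s'); try tauto. subst; auto.
    + injection Heq; intros; subst. exfalso; eapply pure_shift_not_value; eauto.
  - destruct E'; simpl in Heq; try discriminate.
    + injection Heq; intros; subst. exfalso; simpl in PE'. exact (pure_shift_not_value _ _ (proj1 PE')).
    + injection Heq; intros; subst. simpl in PE'. destruct (IHE PE E' s s'); try tauto. subst; auto.
  - contradiction.
Qed.

Ltac finv := first
  [ match goal with H: is_value (plugE ?F ?r) |- _ => eapply (plug_redex_not_value F r); [eassumption|exact H] end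
  | match goal with H: plugE ?F ?r = Lam ?b |- _ => eapply (plug_redex_not_value F r); [eassumption| rewrite H; simpl; auto] end
  | match goal with H: Lam ?b = plugE ?F ?r |- _ => eapply (plug_redex_not_value F r); [eassumption| rewrite <- H; simpl; auto] end
  | match goal with H: plugE ?E (Shift ?s) = plugE ?F ?r |- _ => eapply (plug_redex_not_shift E); [|eassumption|eassumption|symmetry; exact H]; assumption end
  | match goal with H: plugE ?F ?r = plugE ?E (Shift ?s) |- _ => eapply (plug_redex_not_shift E); [|eassumption|eassumption|exact H]; assumption end ].

Lemma redex_hole : forall F' r r', evalctx F' -> redex r -> redex r' -> r = plugE F' r' -> F' = Hole.
Proof.
  intros F' r r' EF Hr Hr' Heq. destruct F'; auto; exfalso; simpl in *; subst r;
  destruct Hr as [[t0 [v0 [Vx Hx]]]|[[E0 [t0 [P0 Hx]]]|[v0 [Vx Hx]]]]; try discriminate;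
  injection Hx; intros; subst; try finv.
Qed.

Lemma decomp_unique : forall F, evalctx F -> forall F' r r', evalctx F' -> redex r -> redex r' ->
  plugE F r = plugE F' r' -> F = F' /\ r = r'.
Proof.
  induction F; intros EF F' r r' EF' Hr Hr' Heq.
  - simpl in Heq. pose proof (redex_hole _ _ _ EF' Hr Hr' Heq). subst; auto.
  - destruct F'.
    + simpl in Heq. symmetry in Heq. pose proof (redex_hole _ _ _ EF Hr' Hr Heq). discriminate.
    + simpl in *. injection Heq; intros; subst. destruct (IHF (proj2 EF) F' r r'); try tauto. subst; auto.
    + simpl in *. injection Heq; intros; subst. exfalso. destruct EF as [EF1 EF2]; finv.
    + simpl in Heq; discriminate.
  - destruct F'.
    + simpl in Heq. symmetry in Heq. pose proof (redex_hole _ _ _ EF Hr' Hr Heq). discriminate.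
    + simpl in *. injection Heq; intros; subst. exfalso. destruct EF' as [EF1 EF2]; finv.
    + simpl in *. injection Heq; intros; subst. destruct (IHF EF F' r r'); try tauto. subst; auto.
    + simpl in Heq; discriminate.
  - destruct F'.
    + simpl in Heq. symmetry in Heq. pose proof (redex_hole _ _ _ EF Hr' Hr Heq). discriminate.
    + simpl in Heq; discriminate.
    + simpl in Heq; discriminate.
    + simpl in *. injection Heq; intros; subst. destruct (IHF EF F' r r'); try tauto. subst; auto.
Qed.

Lemma step_det : forall t u u', step t u -> step t u' -> u = u'.
Proof.
  intros t u u' H1 H2.
  inversion H1 as [F1 t1 v1 EF1 V1|F1 E1 t1 EF1 PE1|F1 v1 EF1 V1]; subst;
  inversion H2 as [F2 t2 v2 EF2 V2 Ht|F2 E2 t2 EF2 PE2 Ht|F2 v2 EF2 V2 Ht];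
  match goal with H : plugE ?F ?r = plugE ?F' ?r' |- _ =>
    destruct (decomp_unique F ltac:(assumption) F' r r' ltac:(assumption)) as [<- Hr];
    [ unfold redex; eauto 10 | unfold redex; eauto 10 | exact H | ] end;
  subst; try discriminate.
  - injection Hr; intros; subst; auto.
  - injection Hr; intros. destruct (pure_decomp_unique E2 PE2 E1 t2 t1 PE1 H); subst; auto.
  - injection Hr; intros; subst. exfalso; eapply pure_shift_not_value; eauto.
  - injection Hr; intros; subst. exfalso; eapply pure_shift_not_value; eauto.
  - injection Hr; intros; subst; auto.
Qed.
Definition rflip (R : rel) : rel := fun x y => R y x.

Lemma tilde_open_mono : forall (R S : rel), (forall x y, R x y -> tilde_open S x y) ->
  forall a b, tilde_open R a b -> tilde_open S a b.
Proof. intros R S H a b T; induction T; eauto using tilde_open. Qed.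

Lemma tilde_mono : forall (R S : rel), (forall x y, R x y -> tilde_open S x y) ->
  forall a b, tilde R a b -> tilde S a b.
Proof. intros R S H a b [T C]; split; eauto using tilde_open_mono. Qed.

Lemma hat_mono : forall (R S : rel), (forall x y, R x y -> tilde_open S x y) ->
  forall F0 F1, hat R F0 F1 -> hat S F0 F1.
Proof. intros R S H F0 F1 T; induction T; econstructor; eauto using tilde_mono. Qed.

Lemma tilde_open_flip : forall R a b, tilde_open R a b -> tilde_open (rflip R) b a.
Proof. intros R a b T; induction T; eauto using tilde_open. Qed.

Lemma tilde_flip : forall R a b, tilde R a b -> tilde (rflip R) b a.
Proof. intros R a b [T [C1 C2]]; split; auto using tilde_open_flip. Qed.

Lemma hat_flip : forall R F0 F1, hat R F0 F1 -> hat (rflip R) F1 F0.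
Proof. intros R F0 F1 T; induction T; econstructor; eauto using tilde_flip. Qed.

Lemma environment_flip : forall R, environment R -> environment (rflip R).
Proof. intros R H a b Hab; destruct (H b a Hab) as [? [? [?|?]]]; intuition. Qed.

Lemma tilde_open_refl : forall R t, tilde_open R t t.
Proof. intros R t; induction t; eauto using tilde_open. Qed.

Lemma tilde_open_plugC : forall R C t0 t1, tilde_open R t0 t1 -> tilde_open R (plugC C t0) (plugC C t1).
Proof. intros R C; induction C; intros; simpl; eauto using tilde_open, tilde_open_refl. Qed.

Lemma tilde_open_idem : forall R a b, tilde_open (tilde R) a b -> tilde_open R a b.
Proof. intros R a b T; induction T; eauto using tilde_open. destruct H; auto. Qed.

Lemma hat_evalctx : forall R F0 F1, hat R F0 F1 -> evalctx F0 /\ evalctx F1.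
Proof. intros R F0 F1 T; induction T; simpl; intuition. Qed.

Lemma hat_closed : forall R F0 F1, hat R F0 F1 -> closedE 0 F0 /\ closedE 0 F1.
Proof. intros R F0 F1 T; induction T; simpl; unfold tilde, closed in *; intuition. Qed.

Lemma hat_plug : forall R F0 F1, hat R F0 F1 -> forall t0 t1, tilde_open R t0 t1 ->
  tilde_open R (plugE F0 t0) (plugE F1 t1).
Proof. intros R F0 F1 T; induction T; intros; simpl; unfold tilde in *; intuition eauto using tilde_open. Qed.

Lemma hat_comp : forall R A0 A1, hat R A0 A1 -> forall B0 B1, hat R B0 B1 ->
  hat R (compE A0 B0) (compE A1 B1).
Proof. intros R A0 A1 T; induction T; intros; simpl; eauto using hat. Qed.

Lemma hat_pure : forall R F0 F1, hat R F0 F1 -> pure F0 -> pure F1.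
Proof. intros R F0 F1 T; induction T; simpl; intuition. Qed.

Lemma hat_hole_inv : forall R F1, hat R Hole F1 -> F1 = Hole.
Proof. intros R F1 T; inversion T; auto. Qed.

Lemma hat_plug_tilde : forall R F0 F1 t0 t1, hat R F0 F1 -> tilde R t0 t1 ->
  tilde R (plugE F0 t0) (plugE F1 t1).
Proof.
  intros R F0 F1 t0 t1 H [T [C0 C1]]. destruct (hat_closed _ _ _ H).
  split; [apply hat_plug; auto|]. unfold closed in *; rewrite !closed_plugE; auto.
Qed.

Lemma tilde_open_subst : forall (R : rel), (forall x y, R x y -> closed x /\ closed y) ->
  forall a b, tilde_open R a b -> forall k v w, closed v -> closed w -> tilde_open R v w ->
  tilde_open R (subst_at k a v) (subst_at k b w).
Proof.
  intros R HR a b T; induction T; intros k v w Cv Cw Tvw; simpl; eauto using tilde_open.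
  - destruct (HR a b H). rewrite !subst_at_closed; auto using tilde_open;
    eapply closed_at_mono; eauto; lia.
  - destruct (n =? k). rewrite !liftn_closed; auto.
    destruct (k <? n); apply to_var.
Qed.

Lemma env_closed : forall R, environment R -> forall x y, R x y -> closed x /\ closed y.
Proof. intros R H x y Hxy; destruct (H x y Hxy); tauto. Qed.

Lemma env_value_l : forall R, environment R -> forall x y, R x y -> is_value x -> is_value y.
Proof. intros R H x y Hxy V; destruct (H x y Hxy) as [_ [_ [[]|[[]]]]]; tauto. Qed.

Lemma env_value_r : forall R, environment R -> forall x y, R x y -> is_value y -> is_value x.
Proof. intros R H x y Hxy V; destruct (H x y Hxy) as [_ [_ [[]|[? []]]]]; tauto. Qed.

Lemma env_nostep_l : forall R, environment R -> forall x y u, R x y -> ~ step x u.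
Proof.
  intros R H x y u Hxy; destruct (H x y Hxy) as [_ [_ [[]|[]]]];
  [apply value_no_step; auto | apply H0].
Qed.

Lemma value_tilde_l : forall R, environment R -> forall a b, tilde_open R a b -> is_value a -> is_value b.
Proof.
  intros R HR a b T V; inversion T; subst; simpl in *; auto; try contradiction.
  eapply env_value_l; eauto.
Qed.

Lemma value_tilde_r : forall R, environment R -> forall a b, tilde_open R a b -> is_value b -> is_value a.
Proof.
  intros R HR a b T V; inversion T; subst; simpl in *; auto; try contradiction.
  eapply env_value_r; eauto.
Qed.

Lemma dec_ctx : forall R, environment R -> forall G0, evalctx G0 -> forall r0 b,
  (exists u, step r0 u) -> closed (plugE G0 r0) -> closed b -> tilde_open R (plugE G0 r0) b ->
  exists G1 b', b = plugE G1 b' /\ hat R G0 G1 /\ tilde_open R r0 b' /\ closed r0 /\ closed b'.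
Proof.
  intros R HR G0; induction G0; intros EG r0 b [u Su] C0 C1 T; simpl in *.
  - exists Hole, b; repeat split; auto using hat.
  - inversion T; subst.
    + exfalso. eapply (env_nostep_l R HR); eauto.
      apply (step_ctx _ _ Su (AppR t G0)); simpl; tauto.
    + destruct EG as [Vt EG]. destruct C0 as [C0a C0b]. destruct C1 as [C1a C1b].
      match goal with Ht: tilde_open R t ?bl, Hr: tilde_open R (plugE G0 r0) ?br |- _ =>
      destruct (IHG0 EG r0 br (ex_intro _ u Su) C0b C1b Hr) as [G1 [b'' [-> [HH [TT [Cr Cb]]]]]];
      exists (AppR bl G1), b''; simpl; repeat split; auto;
      constructor; auto; [eapply value_tilde_l; eauto | split; auto] end.
  - inversion T; subst.
    + exfalso. eapply (env_nostep_l R HR); eauto.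
      apply (step_ctx _ _ Su (AppL G0 t)); simpl; tauto.
    + destruct C0 as [C0a C0b]. destruct C1 as [C1a C1b].
      match goal with Ht: tilde_open R t ?br, Hr: tilde_open R (plugE G0 r0) ?bl |- _ =>
      destruct (IHG0 EG r0 bl (ex_intro _ u Su) C0a C1a Hr) as [G1 [b'' [-> [HH [TT [Cr Cb]]]]]];
      exists (AppL G1 br), b''; simpl; repeat split; auto;
      constructor; auto; split; auto end.
  - inversion T; subst.
    + exfalso. eapply (env_nostep_l R HR); eauto.
      apply (step_ctx _ _ Su (RstC G0)); simpl; tauto.
    + match goal with Hr: tilde_open R (plugE G0 r0) ?b0 |- _ =>
      destruct (IHG0 EG r0 b0 (ex_intro _ u Su) C0 C1 Hr) as [G1 [b'' [-> [HH [TT [Cr Cb]]]]]] end.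
      exists (RstC G1), b''; simpl; repeat split; auto. constructor; auto.
Qed.

Lemma dec_pure : forall R, environment R -> forall E0, pure E0 -> forall s0 b,
  closed (plugE E0 (Shift s0)) -> closed b -> tilde_open R (plugE E0 (Shift s0)) b ->
  (exists E1 s1, b = plugE E1 (Shift s1) /\ pure E1 /\ hat R E0 E1 /\ tilde_open R s0 s1) \/
  (exists E0c E0b E1c y, E0 = compE E0c E0b /\ b = plugE E1c y /\ pure E0c /\ pure E0b /\
     pure E1c /\ hat R E0c E1c /\ R (plugE E0b (Shift s0)) y).
Proof.
  intros R HR E0; induction E0; intros PE s0 b C0 C1 T; simpl in *.
  - inversion T; subst.
    + right. exists Hole, Hole, Hole, b; simpl; repeat split; auto using hat.
    + left. eexists Hole, _; simpl; repeat split; eauto using hat.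
  - inversion T; subst.
    + right. exists Hole, (AppR t E0), Hole, b; simpl; repeat split; auto using hat; tauto.
    + destruct PE as [Vt PE]. destruct C0 as [C0a C0b]. destruct C1 as [C1a C1b].
      match goal with Ht: tilde_open R t ?bl, Hr: tilde_open R (plugE E0 (Shift s0)) ?br |- _ =>
      assert (Vb : is_value bl) by (eapply value_tilde_l; eauto);
      destruct (IHE0 PE s0 br C0b C1b Hr) as [[E1 [s1 [-> [P1 [HH TT]]]]]|[E0c [E0b [E1c [y [-> [-> [P0c [P0b [P1c [HH Ry]]]]]]]]]]];
      [ left; exists (AppR bl E1), s1; simpl; repeat split; auto; constructor; auto; split; auto
      | right; exists (AppR t E0c), E0b, (AppR bl E1c), y; simpl; repeat split; auto;
        constructor; auto; split; auto ] end.
  - inversion T; subst.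
    + right. exists Hole, (AppL E0 t), Hole, b; simpl; repeat split; auto using hat.
    + destruct C0 as [C0a C0b]. destruct C1 as [C1a C1b].
      match goal with Ht: tilde_open R t ?br, Hr: tilde_open R (plugE E0 (Shift s0)) ?bl |- _ =>
      destruct (IHE0 PE s0 bl C0a C1a Hr) as [[E1 [s1 [-> [P1 [HH TT]]]]]|[E0c [E0b [E1c [y [-> [-> [P0c [P0b [P1c [HH Ry]]]]]]]]]]];
      [ left; exists (AppL E1 br), s1; simpl; repeat split; auto; constructor; auto; split; auto
      | right; exists (AppL E0c t), E0b, (AppL E1c br), y; simpl; repeat split; auto;
        constructor; auto; split; auto ] end.
  - contradiction.
Qed.
Lemma is_value_lam : forall v, is_value v -> exists b, v = Lam b.
Proof. destruct v; simpl; intros; try contradiction; eauto. Qed.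

Lemma capture_tilde : forall R, (forall x y, R x y -> closed x /\ closed y) ->
  forall E0 E1, hat R E0 E1 ->
  tilde_open R (capture E0) (capture E1) /\ closed (capture E0) /\ closed (capture E1).
Proof.
  intros R HR E0 E1 H. destruct (hat_closed _ _ _ H) as [C0 C1]. unfold capture.
  rewrite !liftE_closed; auto. repeat split.
  - apply to_lam, to_reset, hat_plug; auto using tilde_open.
  - simpl. apply closed_plugE; split; [eapply closedE_mono; eauto|simpl; lia].
  - simpl. apply closed_plugE; split; [eapply closedE_mono; eauto|simpl; lia].
Qed.

Lemma capture_comp : forall A B,
  capture (compE A B) = Lam (Reset (plugE (liftE 0 A) (plugE (liftE 0 B) (Var 0)))).
Proof. intros; unfold capture; rewrite liftE_comp, plugE_comp; auto. Qed.

Lemma caseB_step : forall X, env_bisim X -> forall E2, X_env X E2 -> forall a b, tilde E2 a b ->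
  forall a', step a a' ->
  exists b', step b b' /\ exists F0 F1 t0 t1, hat E2 F0 F1 /\ a' = plugE F0 t0 /\
    b' = plugE F1 t1 /\ (X_tri X E2 t0 t1 \/ tilde E2 t0 t1).
Proof.
  intros X HX E2 HE2 a b [Tab [Ca Cb]] a' Hs.
  destruct HX as [[WF1 WF2] [_ C2]]. pose proof (WF1 E2 HE2) as HR.
  pose proof (env_closed E2 HR) as HRc.
  destruct (C2 E2 HE2) as [C2a C2b].
  inversion Hs as [F t v EF V|F E0 t EF PE|F v EF V]; subst.
  - destruct (dec_ctx E2 HR F EF (App (Lam t) v) b) as [G1 [b' [-> [HH [Tr [Cr Cb']]]]]];
      [eexists; apply (step_beta Hole); simpl; auto | exact Ca | exact Cb | exact Tab |].
    pose proof (proj2 (hat_evalctx _ _ _ HH)) as EG1.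
    inversion Tr; subst.
    + exfalso. eapply (env_nostep_l E2 HR); eauto. apply (step_beta Hole); simpl; auto.
    + destruct Cr as [Crl Crv]. destruct Cb' as [Cbl Cbv].
      match goal with Hl: tilde_open E2 (Lam t) ?bl, Hv: tilde_open E2 v ?bv |- _ =>
        rename bl into bL; rename bv into bV; rename Hl into TL; rename Hv into TV end.
      assert (VV : is_value bV) by (eapply value_tilde_l; eauto).
      inversion TL; subst.
      * assert (VL : is_value bL) by (eapply env_value_l; eauto; simpl; auto).
        destruct (is_value_lam _ VL) as [t1 ->].
        exists (plugE G1 (subst t1 bV)); split; [apply step_beta; auto|].
        exists F, G1, (subst t v), (subst t1 bV); repeat split; auto.
        left. apply C2a; auto. split; auto.
      * match goal with Hb: tilde_open E2 t ?t1 |- _ => rename t1 into b0 end.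
        exists (plugE G1 (subst b0 bV)); split; [apply step_beta; auto|].
        exists F, G1, (subst t v), (subst b0 bV); repeat split; auto.
        right. split; [apply tilde_open_subst; auto|].
        split; apply closed_subst; auto.
  - destruct (dec_ctx E2 HR F EF (Reset (plugE E0 (Shift t))) b) as [G1 [b' [-> [HH [Tr [Cr Cb']]]]]];
      [eexists; apply (step_shift Hole); simpl; auto | exact Ca | exact Cb | exact Tab |].
    pose proof (proj2 (hat_evalctx _ _ _ HH)) as EG1.
    inversion Tr; subst.
    + exfalso. eapply (env_nostep_l E2 HR); eauto. apply (step_shift Hole); simpl; auto.
    + match goal with Hl: tilde_open E2 (plugE E0 (Shift t)) ?bl |- _ =>
        rename bl into bI; rename Hl into TI end.
      unfold closed in Cr, Cb'; simpl in Cr, Cb'.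
      destruct (dec_pure E2 HR E0 PE t bI Cr Cb' TI) as
        [[E1 [s1 [-> [P1 [HE Ts]]]]]|[E0c [E0b [E1c [y [-> [-> [P0c [P0b [P1c [HE Ry]]]]]]]]]]].
      * exists (plugE G1 (Reset (subst s1 (capture E1)))); split; [apply step_shift; auto|].
        exists F, G1, (Reset (subst t (capture E0))), (Reset (subst s1 (capture E1))); repeat split; auto.
        right. destruct (capture_tilde E2 HRc E0 E1 HE) as [Tc [Cc0 Cc1]].
        pose proof Cr as Cr'. pose proof Cb' as Cb''.
        apply closed_plugE in Cr'. apply closed_plugE in Cb''. simpl in Cr', Cb''.
        split; [apply to_reset, tilde_open_subst; auto|].
        split; apply closed_subst; tauto.
      * destruct (HR _ _ Ry) as [_ [Cy [[Vx _]|[_ Sy]]]].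
        { exfalso; eapply pure_shift_not_value; eauto. }
        destruct (stuck_decomp y Cy Sy) as [E1b [s1 [P1b ->]]].
        exists (plugE G1 (Reset (subst s1 (capture (compE E1c E1b))))); split.
        { rewrite <- plugE_comp. apply step_shift; auto using pure_comp. }
        exists F, G1, (Reset (subst t (capture (compE E0c E0b)))),
          (Reset (subst s1 (capture (compE E1c E1b)))); repeat split; auto.
        left. rewrite !capture_comp. apply C2b; auto.
  - destruct (dec_ctx E2 HR F EF (Reset v) b) as [G1 [b' [-> [HH [Tr [Cr Cb']]]]]];
      [eexists; apply (step_reset Hole); simpl; auto | exact Ca | exact Cb | exact Tab |].
    pose proof (proj2 (hat_evalctx _ _ _ HH)) as EG1.
    inversion Tr; subst.
    + exfalso. eapply (env_nostep_l E2 HR); eauto. apply (step_reset Hole); simpl; auto.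
    + match goal with Hl: tilde_open E2 v ?bl |- _ => rename bl into bI; rename Hl into TI end.
      assert (VV : is_value bI) by (eapply value_tilde_l; eauto).
      exists (plugE G1 bI); split; [apply step_reset; auto|].
      exists F, G1, v, bI; repeat split; auto.
      right. split; auto. Qed.
Definition flipX (X : envrel) : envrel :=
  {| X_env := fun E => X_env X (rflip E); X_tri := fun E a b => X_tri X (rflip E) b a |}.

Lemma flip_add_pair : forall E a b, rflip (add_pair E a b) = add_pair (rflip E) b a.
Proof.
  intros; apply functional_extensionality; intro x; apply functional_extensionality; intro y;
  unfold rflip, add_pair; apply propositional_extensionality; tauto.
Qed.

Lemma flip_bisim : forall X, env_bisim X -> env_bisim (flipX X).
Proof.
  intros X [[W1 W2] [C1 C2]]. split; [split|split].
  - intros E H; simpl in H. exact (environment_flip _ (W1 _ H)).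
  - intros E t0 t1 H; simpl in H. destruct (W2 _ _ _ H) as [He [? ?]].
    split; auto. exact (environment_flip _ He).
  - intros E t0 t1 H; simpl in H.
    destruct (C1 _ _ _ H) as [s1 [v1 [st1 [s0 [v0 st0]]]]].
    repeat split.
    + exact s0.
    + intros V. destruct (v0 V) as [w [? [? Hw]]]. exists w; split; [assumption|split; [assumption|]].
      simpl. rewrite flip_add_pair. exact Hw.
    + intros V. destruct (st0 V) as [w [? [? Hw]]]. exists w; split; [assumption|split; [assumption|]].
      simpl. rewrite flip_add_pair. exact Hw.
    + exact s1.
    + intros V. destruct (v1 V) as [w [? [? Hw]]]. exists w; split; [assumption|split; [assumption|]].
      simpl. rewrite flip_add_pair. exact Hw.
    + intros V. destruct (st1 V) as [w [? [? Hw]]]. exists w; split; [assumption|split; [assumption|]].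
      simpl. rewrite flip_add_pair. exact Hw.
  - intros E HE; simpl in HE. destruct (C2 _ HE) as [Ca Cb]. split.
    + intros b0 b1 v0 v1 HL V0 V1 Tv. simpl. apply Ca; auto. apply tilde_flip; auto.
    + intros E0 E1 s0 s1 E0' E1' P0 P1 HS P0' P1' HH. simpl. apply Cb; auto. apply hat_flip; auto.
Qed.

Definition Env' (X : envrel) (E : rel) : Prop :=
  environment E /\ exists E2, X_env X E2 /\ (forall x y, E x y -> tilde E2 x y).

Definition Tri' (X : envrel) (E : rel) (a b : term) : Prop :=
  environment E /\ closed a /\ closed b /\
  exists E2, (forall x y, E x y -> tilde E2 x y) /\
  exists F0 F1 t0 t1, hat E2 F0 F1 /\ a = plugE F0 t0 /\ b = plugE F1 t1 /\
    (X_tri X E2 t0 t1 \/ (X_env X E2 /\ tilde E2 t0 t1)).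

Definition Xp (X : envrel) : envrel := {| X_env := Env' X; X_tri := Tri' X |}.

Definition aside (Y : envrel) (E : rel) (a b : term) : Prop :=
  (forall a', step a a' -> exists b', steps b b' /\ X_tri Y E a' b') /\
  (is_value a -> exists v1, steps b v1 /\ is_value v1 /\ X_env Y (add_pair E a v1)) /\
  (stuck a -> exists b', steps b b' /\ stuck b' /\ X_env Y (add_pair E a b')).

Lemma aside_prefix : forall Y E a b b', aside Y E a b' -> steps b b' -> aside Y E a b.
Proof.
  intros Y E a b b' [A1 [A2 A3]] S. repeat split.
  - intros a' H. destruct (A1 a' H) as [c [? ?]]. exists c; split; eauto using steps_trans.
  - intros H. destruct (A2 H) as [c [? ?]]. exists c; split; eauto using steps_trans.
  - intros H. destruct (A3 H) as [c [? ?]]. exists c; split; eauto using steps_trans.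
Qed.

Lemma mkTri : forall X, env_bisim X -> forall E E2 F0 F1 t0 t1, environment E ->
  (forall x y, E x y -> tilde E2 x y) -> hat E2 F0 F1 ->
  (X_tri X E2 t0 t1 \/ (X_env X E2 /\ tilde E2 t0 t1)) ->
  Tri' X E (plugE F0 t0) (plugE F1 t1).
Proof.
  intros X [[W1 W2] _] E E2 F0 F1 t0 t1 HE Hsub HH HT.
  assert (closed t0 /\ closed t1) as [Ct0 Ct1].
  { destruct HT as [HT|[_ [_ [? ?]]]]; auto. destruct (W2 _ _ _ HT); tauto. }
  destruct (hat_closed _ _ _ HH).
  unfold Tri', closed in *. refine (conj HE (conj _ (conj _ _)));
  [rewrite closed_plugE; auto | rewrite closed_plugE; auto |].
  exists E2; split; auto. exists F0, F1, t0, t1; auto.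
Qed.

Lemma env_add : forall E a b, environment E -> closed a -> closed b ->
  ((is_value a /\ is_value b) \/ (stuck a /\ stuck b)) -> environment (add_pair E a b).
Proof.
  intros E a b HE Ca Cb Hab x y [H|[-> ->]]; auto.
Qed.

Lemma caseB_aside : forall X, env_bisim X -> forall E E2, X_env X E2 -> environment E ->
  (forall x y, E x y -> tilde E2 x y) -> forall a b, tilde E2 a b -> aside (Xp X) E a b.
Proof.
  intros X HX E E2 HE2 HE Hsub a b Tab.
  pose proof (proj1 (proj1 HX) E2 HE2) as HR.
  assert (Hsub' : forall x y, add_pair E a b x y -> tilde E2 x y)
    by (intros x y [H|[-> ->]]; auto).
  destruct Tab as [T [Ca Cb]].
  repeat split.
  - intros a' Hs. destruct (caseB_step X HX E2 HE2 a b (conj T (conj Ca Cb)) a' Hs)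
      as [b' [Sb [F0 [F1 [t0 [t1 [HH [-> [-> HT]]]]]]]]].
    exists (plugE F1 t1); split; [eapply steps_step; eauto using steps_refl|].
    simpl. eapply mkTri; eauto. destruct HT; auto.
  - intros V. exists b; split; [constructor|]. split; [eapply value_tilde_l; eauto|].
    simpl. split; [apply env_add; auto; left; split; auto; eapply value_tilde_l; eauto|].
    exists E2; split; auto.
  - intros [NV NS].
    assert (SB : stuck b).
    { split.
      - intros V. apply NV. eapply value_tilde_r; eauto.
      - intros u Hu.
        destruct (caseB_step (flipX X) (flip_bisim X HX) (rflip E2) HE2 b a
                    (tilde_flip _ _ _ (conj T (conj Ca Cb))) u Hu) as [a' [Sa _]].
        eapply NS; eauto. }
    exists b; split; [constructor|]. split; auto.
    simpl. split; [apply env_add; auto; right; split; auto; split; auto|].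
    exists E2; split; auto.
Qed.

Lemma not_normal_step : forall t, ~ normal_form t -> exists u, step t u.
Proof.
  intros t H. apply NNPP. intros H'. apply H. right. split.
  - intros V; apply H; left; auto.
  - intros u Hu; apply H'; eauto.
Qed.

Lemma caseA_aside : forall X, env_bisim X -> forall E E2 F0 F1 t0 t1, environment E ->
  (forall x y, E x y -> tilde E2 x y) -> hat E2 F0 F1 -> X_tri X E2 t0 t1 ->
  aside (Xp X) E (plugE F0 t0) (plugE F1 t1).
Proof.
  intros X HX E E2 F0 F1 t0 t1 HE Hsub HH HT.
  pose proof HX as [[W1 W2] [C1 C2]].
  destruct (W2 _ _ _ HT) as [HE2 [Ct0 Ct1]].
  destruct (hat_evalctx _ _ _ HH) as [EF0 EF1].
  destruct (C1 _ _ _ HT) as [A1 [A2 [A3 _]]].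
  destruct (classic (normal_form t0)) as [N|N].
  - assert (exists t1s, steps t1 t1s /\ X_env X (add_pair E2 t0 t1s)) as [t1s [St Henv]].
    { destruct N as [V|S].
      - destruct (A2 V) as [w [? [? ?]]]; eauto.
      - destruct (A3 S) as [w [? [? ?]]]; eauto. }
    eapply aside_prefix; [|apply steps_ctx; eauto].
    pose proof (W1 _ Henv) as HE3.
    assert (Hm : forall x y, E2 x y -> tilde_open (add_pair E2 t0 t1s) x y)
      by (intros; apply to_R; left; auto).
    eapply (caseB_aside X HX E (add_pair E2 t0 t1s)); auto.
    + intros x y Hxy. eapply tilde_mono; eauto.
    + apply hat_plug_tilde; [eapply hat_mono; eauto|].
      assert (Hp : add_pair E2 t0 t1s t0 t1s) by (right; auto).
      destruct (env_closed _ HE3 _ _ Hp). split; auto. apply to_R; auto.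
  - destruct (not_normal_step t0 N) as [t0' St0].
    pose proof (step_ctx _ _ St0 F0 EF0) as SF.
    repeat split.
    + intros a' Ha. rewrite (step_det _ _ _ Ha SF).
      destruct (A1 t0' St0) as [t1' [St1 HT']].
      exists (plugE F1 t1'); split; [apply steps_ctx; auto|].
      simpl. eapply mkTri; eauto.
    + intros V. exfalso. pose proof (plugE_value _ _ V); subst F0. simpl in V.
      apply N; left; auto.
    + intros [_ S]. exfalso. eapply S; eauto.
Qed.

Lemma Tri'_aside : forall X, env_bisim X -> forall E a b, Tri' X E a b -> aside (Xp X) E a b.
Proof.
  intros X HX E a b [HE [Ca [Cb [E2 [Hsub [F0 [F1 [t0 [t1 [HH [-> [-> HT]]]]]]]]]]]].
  destruct HT as [HT|[HE2 T]].
  - eapply caseA_aside; eauto.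
  - eapply caseB_aside; eauto. apply hat_plug_tilde; auto.
Qed.

Lemma Tri'_flip : forall X E a b, Tri' X E a b -> Tri' (flipX X) (rflip E) b a.
Proof.
  intros X E a b [HE [Ca [Cb [E2 [Hsub [F0 [F1 [t0 [t1 [HH [-> [-> HT]]]]]]]]]]]].
  refine (conj (environment_flip _ HE) (conj Cb (conj Ca _))).
  exists (rflip E2). split.
  - intros x y H. apply tilde_flip. apply Hsub. exact H.
  - exists F1, F0, t1, t0. repeat split; auto using hat_flip.
    destruct HT as [HT|[HE2 T]]; [left; exact HT| right; split; [exact HE2| apply tilde_flip; auto]].
Qed.

Lemma Tri'_unflip : forall X E a b, Tri' (flipX X) (rflip E) b a -> Tri' X E a b.
Proof.
  intros X E a b [HE [Cb [Ca [E2 [Hsub [F1 [F0 [t1 [t0 [HH [-> [-> HT]]]]]]]]]]]].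
  refine (conj (environment_flip _ HE) (conj Ca (conj Cb _))).
  exists (rflip E2). split.
  - intros x y H. apply tilde_flip. apply Hsub. exact H.
  - exists F0, F1, t0, t1. repeat split; auto using hat_flip.
    destruct HT as [HT|[HE2 T]]; [left; exact HT| right; split; [exact HE2| apply tilde_flip; auto]].
Qed.

Lemma Env'_unflip : forall X E a b, Env' (flipX X) (add_pair (rflip E) b a) -> Env' X (add_pair E a b).
Proof.
  intros X E a b [HE [E3 [H3 Hsub]]]. split.
  - intros x y Hxy. assert (H' : add_pair (rflip E) b a y x)
      by (destruct Hxy as [H|[-> ->]]; [left; exact H|right; auto]).
    destruct (HE y x H') as [? [? [?|?]]]; intuition.
  - exists (rflip E3). split; [exact H3|].
    intros x y Hxy. apply tilde_flip. apply Hsub.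
    destruct Hxy as [H|[-> ->]]; [left; exact H|right; auto].
Qed.

Lemma Tri'_bside : forall X, env_bisim X -> forall E a b, Tri' X E a b ->
  (forall b', step b b' -> exists a', steps a a' /\ Tri' X E a' b') /\
  (is_value b -> exists v0, steps a v0 /\ is_value v0 /\ Env' X (add_pair E v0 b)) /\
  (stuck b -> exists a', steps a a' /\ stuck a' /\ Env' X (add_pair E a' b)).
Proof.
  intros X HX E a b HT.
  destruct (Tri'_aside (flipX X) (flip_bisim X HX) (rflip E) b a (Tri'_flip X E a b HT)) as [A1 [A2 A3]].
  repeat split.
  - intros b' Hs. destruct (A1 b' Hs) as [a' [S H]]. exists a'; split; auto. apply Tri'_unflip; exact H.
  - intros V. destruct (A2 V) as [a' [S [V' H]]]. exists a'; split; [exact S|split; [exact V'|apply Env'_unflip; exact H]].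
  - intros V. destruct (A3 V) as [a' [S [V' H]]]. exists a'; split; [exact S|split; [exact V'|apply Env'_unflip; exact H]].
Qed.
Lemma compE_assoc : forall A B C, compE A (compE B C) = compE (compE A B) C.
Proof. induction A; intros; simpl; try rewrite IHA; auto. Qed.

Lemma Env'_clauses : forall X, env_bisim X -> forall E, Env' X E ->
  (forall b0 b1 v0 v1, E (Lam b0) (Lam b1) -> is_value v0 -> is_value v1 ->
     tilde E v0 v1 -> Tri' X E (subst b0 v0) (subst b1 v1)) /\
  (forall E0 E1 s0 s1 E0' E1',
     pure E0 -> pure E1 ->
     E (plugE E0 (Shift s0)) (plugE E1 (Shift s1)) ->
     pure E0' -> pure E1' -> hat E E0' E1' ->
     Tri' X E
       (Reset (subst s0 (Lam (Reset (plugE (liftE 0 E0') (plugE (liftE 0 E0) (Var 0)))))))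
       (Reset (subst s1 (Lam (Reset (plugE (liftE 0 E1') (plugE (liftE 0 E1) (Var 0)))))))).
Proof.
  intros X HX E [HE [E2 [HE2 Hsub]]].
  pose proof HX as [[W1 W2] [_ C2]].
  pose proof (W1 E2 HE2) as HR2. pose proof (env_closed E2 HR2) as HRc.
  destruct (C2 E2 HE2) as [C2a C2b].
  assert (Hm : forall x y, E x y -> tilde_open E2 x y) by (intros x y H; exact (proj1 (Hsub x y H))).
  split.
  - intros b0 b1 v0 v1 HL V0 V1 Tv.
    destruct (Hsub _ _ HL) as [T [C0 C1]].
    pose proof (tilde_mono _ _ Hm _ _ Tv) as Tv'.
    apply (mkTri X HX E E2 Hole Hole (subst b0 v0) (subst b1 v1)); auto using hat.
    inversion T; subst.
    + left. apply C2a; auto.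
    + right. split; auto. destruct Tv' as [Tv'' [Cv0 Cv1]].
      split; [apply tilde_open_subst; auto|].
      split; apply closed_subst; auto.
  - intros E0 E1 s0 s1 E0' E1' P0 P1 HS P0' P1' HH.
    destruct (Hsub _ _ HS) as [T [C0 C1]].
    pose proof (hat_mono _ _ Hm _ _ HH) as HH'.
    rewrite <- !capture_comp.
    apply (mkTri X HX E E2 Hole Hole); auto using hat.
    destruct (dec_pure E2 HR2 E0 P0 s0 _ C0 C1 T) as
      [[E1x [s1x [Heq [P1x [HE01 Ts]]]]]|[E0c [E0b [E1c [y [-> [Heq [P0c [P0b [P1c [HEc Ry]]]]]]]]]]].
    + destruct (pure_decomp_unique E1 P1 E1x s1 s1x P1x Heq); subst.
      right. split; auto.
      destruct (capture_tilde E2 HRc _ _ (hat_comp _ _ _ HH' _ _ HE01)) as [Tc [Cc0 Cc1]].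
      pose proof C0 as C0'. pose proof C1 as C1'.
      unfold closed in C0', C1'. apply closed_plugE in C0'. apply closed_plugE in C1'. simpl in C0', C1'.
      split; [apply to_reset, tilde_open_subst; auto|].
      split; apply closed_subst; tauto.
    + destruct (HR2 _ _ Ry) as [_ [Cy [[Vx _]|[_ Sy]]]].
      { exfalso; eapply pure_shift_not_value; eauto. }
      destruct (stuck_decomp y Cy Sy) as [E1b [s1b [P1b ->]]].
      rewrite <- plugE_comp in Heq.
      destruct (pure_decomp_unique E1 P1 (compE E1c E1b) s1 s1b (pure_comp _ _ P1c P1b) Heq); subst.
      left. rewrite !compE_assoc, !capture_comp. apply C2b; auto using pure_comp.
      apply hat_comp; auto.
Qed.

Lemma Xp_bisim : forall X, env_bisim X -> env_bisim (Xp X).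
Proof.
  intros X HX. split; [split|split].
  - intros E [HE _]; exact HE.
  - intros E a b [HE [Ca [Cb _]]]; auto.
  - intros E a b HT. destruct (Tri'_aside X HX E a b HT) as [A1 [A2 A3]].
    destruct (Tri'_bside X HX E a b HT) as [B1 [B2 B3]].
    exact (conj A1 (conj A2 (conj A3 (conj B1 (conj B2 B3))))).
  - intros E HEnv; exact (Env'_clauses X HX E HEnv).
Qed.

Theorem lemma7 :
  forall (E : rel) (t0 t1 : term),
    environment E ->
    closed t0 -> closed t1 -> normal_form t0 -> normal_form t1 ->
    bisimilar E t0 t1 ->
    forall C : ctx,
      closed (plugC C t0) -> closed (plugC C t1) ->
      bisimilar E (plugC C t0) (plugC C t1).
Proof.
  intros E t0 t1 HE Ct0 Ct1 N0 N1 [X [HX HT]] C HC0 HC1.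
  exists (Xp X); split; [apply Xp_bisim; auto|].
  pose proof HX as [[W1 W2] [Cl1 _]].
  destruct (Cl1 _ _ _ HT) as [_ [A2 [A3 _]]].
  assert (Henv : X_env X (add_pair E t0 t1)).
  { destruct N0 as [V0|S0].
    - destruct (A2 V0) as [v1 [St [_ Hv]]]. rewrite (normal_steps t1 v1 N1 St) in Hv. exact Hv.
    - destruct (A3 S0) as [v1 [St [_ Hv]]]. rewrite (normal_steps t1 v1 N1 St) in Hv. exact Hv. }
  pose proof (W1 _ Henv) as HE3.
  apply (mkTri X HX E (add_pair E t0 t1) Hole Hole (plugC C t0) (plugC C t1)); auto using hat.
  - intros x y Hxy. destruct (env_closed _ HE x y Hxy). split; [apply to_R; left; auto| auto].
  - right; split; auto. split; [apply tilde_open_plugC, to_R; right; auto| auto].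
Qed.
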